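(* Let $p_1,p_2\ge3$, and let $J(x,y)$, $J_0$ and $C$ be the $p_1p_2\times p_1p_2$ matrices described in the context, and put $J_1(x,y)=J(x,y)-J_0$. Then for every $(x,y)\in[0,2\pi]^2$, $$-C\le J_1(x,y)\le C,$$ where for Hermitian matrices $A\le B$ means that $B-A$ is positive semidefinite.
   Context: Let $a^0,a^1,b^0,b^1:\mathbb{Z}^2\to\mathbb{C}$, $(n,m)\mapsto a^j_{nm},b^j_{nm}$, be $(p_1,p_2)$-periodic with $b^1_{nm}\in\mathbb{R}$. For $x\in[0,2\pi]$ and $n\in\mathbb{Z}$, $\hat A_n(x)$ is the $p_2\times p_2$ matrix with $(\hat A_n)_{mm}=a^1_{nm}$, $(\hat A_n)_{m+1,m}=a^0_{nm}$, $(\hat A_n)_{m,m+1}=\overline{a^0_{nm}}$ ($1\le m\le p_2-1$), $(\hat A_n)_{1,p_2}=e^{ix}a^0_{np_2}$, $(\hat A_n)_{p_2,1}=e^{-ix}\overline{a^0_{np_2}}$, other entries $0$; $\hat B_n(x)$ is defined the same way from $b^1,b^0$. $\hat A^0_n,\hat B^0_n$ denote $\hat A_n,\hat B_n$ with the corner entries $(1,p_2),(p_2,1)$ set to $0$. $J(x,y)$ is the $p_1\times p_1$ block matrix ($p_2\times p_2$ blocks) with diagonal blocks $\hat B_n(x)$, block $(n+1,n)=\hat A_n(x)$, block $(n,n+1)=\hat A_n(x)^*$ ($1\le n\le p_1-1$), block $(1,p_1)=e^{iy}\hat A_{p_1}(x)$, block $(p_1,1)=e^{-iy}\hat A_{p_1}(x)^*$,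 other blocks zero. $J_0$ is the block matrix with diagonal blocks $\hat B^0_n$, block $(n+1,n)=\hat A^0_n$, block $(n,n+1)=(\hat A^0_n)^*$ ($1\le n\le p_1-1$), other blocks zero. $C=\mathrm{diag}(C_1,\dots,C_{p_1})$ (block diagonal), with $C_n=\mathrm{diag}(c_n,0,\dots,0,c_n)$, $c_n=|b^0_{np_2}|+|a^0_{np_2}|+|a^0_{n-1,p_2}|$ for $2\le n\le p_1-1$; $C_1=\mathrm{diag}(e_1,0,\dots,0,e_1)+D$ with $e_1=|b^0_{1p_2}|+|a^0_{1p_2}|$; $C_{p_1}=\mathrm{diag}(e_{p_1},0,\dots,0,e_{p_1})+D$ with $e_{p_1}=|b^0_{p_1p_2}|+|a^0_{p_1-1,p_2}|$; $D=\mathrm{diag}(d_1,\dots,d_{p_2})$, $d_m=|a^1_{p_1m}|+|a^0_{p_1m}|+|a^0_{p_1,m-1}|$ with $a^0_{p_1,0}:=a^0_{p_1,p_2}$. *)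

(* Defs.v *)
From HB Require Import structures.
From mathcomp Require Import all_boot all_order all_algebra.
From mathcomp Require Import spectral.
From mathcomp Require Import all_classical all_reals all_analysis.
From mathcomp Require Import complex.

Set Implicit Arguments.
Unset Strict Implicit.
Unset Printing Implicit Defensive.

Import Order.TTheory GRing.Theory Num.Theory.
Local Open Scope ring_scope.
Local Open Scope complex_scope.
Local Open Scope sesquilinear_scope.

Section Defs.
Variable R : realType.
Local Notation C := (R[i]).

Definition periodic2 (p1 p2 : nat) (a : int -> int -> C) : Prop :=
  forall n m : int, a (n + p1%:Z) m = a n m /\ a n (m + p2%:Z) = a n m.

Definition expi (t : R) : C := cos t +i* sin t.

Definition psdmx n (M : 'M[C]_n) : Prop :=
  M ^t* = M /\ forall v : 'cV[C]_n, 0 <= (v ^t* *m M *m v) ord0 ord0.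

Definition loewner_le n (A B : 'M[C]_n) : Prop := psdmx (B - A).

(* The p2 x p2 matrix \hat A_n(x) (1-based indices m = r+1, m' = c+1):
   diagonal d m, (m+1,m) entry o m, (m,m+1) entry conj (o m),
   corner (1,p2) = ph * o p2, corner (p2,1) = conj ph * conj (o p2).
   With [corner = false] the two corner entries are 0 (this gives \hat A^0_n). *)
Definition hatmx (p2 : nat) (d o : nat -> C) (ph : C) (corner : bool) : 'M[C]_p2 :=
  \matrix_(r < p2, c < p2)
    let m := r.+1 in let m' := c.+1 in
    if m == m' then d m
    else if m == m'.+1 then o m'
    else if m' == m.+1 then (o m)^*
    else if (m == 1%N) && (m' == p2) then (if corner then ph * o p2 else 0)
    else if (m == p2) && (m' == 1%N) then (if corner then ph^* * (o p2)^* else 0)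
    else 0.

Variables (p1 p2 : nat) (a0 a1 b0 b1 : int -> int -> C).

Definition Ahat (n : nat) (x : R) : 'M[C]_p2 :=
  hatmx p2 (fun m => a1 (n%:Z) (m%:Z)) (fun m => a0 (n%:Z) (m%:Z)) (expi x) true.
Definition Bhat (n : nat) (x : R) : 'M[C]_p2 :=
  hatmx p2 (fun m => b1 (n%:Z) (m%:Z)) (fun m => b0 (n%:Z) (m%:Z)) (expi x) true.
Definition Ahat0 (n : nat) : 'M[C]_p2 :=
  hatmx p2 (fun m => a1 (n%:Z) (m%:Z)) (fun m => a0 (n%:Z) (m%:Z)) 0 false.
Definition Bhat0 (n : nat) : 'M[C]_p2 :=
  hatmx p2 (fun m => b1 (n%:Z) (m%:Z)) (fun m => b0 (n%:Z) (m%:Z)) 0 false.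

(* The big matrices are p1 x p1 block matrices with p2 x p2 blocks;
   block row/column i : 'I_p1 corresponds to n = i+1. *)
Local Notation N := (\sum_(i < p1) p2)%N.

Definition Jmx (x y : R) : 'M[C]_N :=
  \mxblock_(i < p1, j < p1)
    let n := i.+1 in let n' := j.+1 in
    if n == n' then Bhat n x
    else if n == n'.+1 then Ahat n' x
    else if n' == n.+1 then (Ahat n x) ^t*
    else if (n == 1%N) && (n' == p1) then expi y *: Ahat p1 x
    else if (n == p1) && (n' == 1%N) then (expi y)^* *: (Ahat p1 x) ^t*
    else 0.

Definition J0mx : 'M[C]_N :=
  \mxblock_(i < p1, j < p1)
    let n := i.+1 in let n' := j.+1 in
    if n == n' then Bhat0 n
    else if n == n'.+1 then Ahat0 n'
    else if n' == n.+1 then (Ahat0 n) ^t*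
    else 0.

Definition J1mx (x y : R) : 'M[C]_N := Jmx x y - J0mx.

Definition endsmx (s : C) : 'M[C]_p2 :=
  diag_mx (\row_(r < p2) if (r.+1 == 1%N) || (r.+1 == p2) then s else 0).

Definition cc (n : nat) : C :=
  `|b0 (n%:Z) (p2%:Z)| + `|a0 (n%:Z) (p2%:Z)| + `|a0 ((n%:Z) - 1) (p2%:Z)|.
Definition e1 : C := `|b0 1 (p2%:Z)| + `|a0 1 (p2%:Z)|.
Definition ep1 : C := `|b0 (p1%:Z) (p2%:Z)| + `|a0 ((p1%:Z) - 1) (p2%:Z)|.
(* d_m = |a^1_{p1 m}| + |a^0_{p1 m}| + |a^0_{p1,m-1}|, where a^0_{p1,0} = a^0_{p1,p2}
   by periodicity *)
Definition Dmx : 'M[C]_p2 :=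
  diag_mx (\row_(r < p2) let m := r.+1 in
     `|a1 (p1%:Z) (m%:Z)| + `|a0 (p1%:Z) (m%:Z)| + `|a0 (p1%:Z) ((m%:Z) - 1)|).

Definition Cblock (n : nat) : 'M[C]_p2 :=
  if n == 1%N then endsmx e1 + Dmx
  else if n == p1 then endsmx ep1 + Dmx
  else endsmx (cc n).

Definition Cmx : 'M[C]_N :=
  \mxblock_(i < p1, j < p1) if i == j then Cblock i.+1 else 0.

End Defs.

(* Main.v *)
Require Import Defs.
From HB Require Import structures.
From mathcomp Require Import all_boot all_order all_algebra.
From mathcomp Require Import spectral.
From mathcomp Require Import all_classical all_reals all_analysis.
From mathcomp Require Import complex.
From mathcomp Require Import ring lra zify.
Import Order.TTheory GRing.Theory Num.Theory.
Local Open Scope ring_scope.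
Local Open Scope sesquilinear_scope.

Lemma conjcE {R : realType} (z : R[i]) : (z^*)%C = (z^*)%R.
Proof. by []. Qed.

Lemma hat_entry {R : realType} p2 (d o : nat -> R[i]) ph (r c : 'I_p2) : (3 <= p2)%N ->
  `|hatmx p2 d o ph true r c| =
    (if c == r :> nat then `|d r.+1| else 0) +
    (if r != 0%N :> nat then (if c == r.-1 :> nat then `|o r| else 0) else 0) +
    (if r.+1 != p2 then (if c == r.+1 :> nat then `|(o r.+1)^*%R| else 0) else 0) +
    (if r == 0%N :> nat then (if c == p2.-1 :> nat then `|ph * o p2| else 0) else 0) +
    (if r.+1 == p2 then (if c == 0%N :> nat then `|ph^*%R * (o p2)^*%R| else 0) else 0).
Proof.
move=> hp; rewrite /hatmx mxE /= !conjcE.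
have := ltn_ord r; have := ltn_ord c.
move: (nat_of_ord r) (nat_of_ord c) => a b hb ha.
repeat (case: eqP => ? /=); try (exfalso; lia); subst; rewrite ?normr0 ?addr0 ?add0r //.
all: by rewrite prednK //; lia.
Qed.

Lemma sum_ind {R : realType} (n k : nat) (X : R[i]) :
  \sum_(c < n) (if c == k :> nat then X else 0) = if (k < n)%N then X else 0.
Proof. by rewrite -big_mkcond big_ord1_eq. Qed.

Lemma sum_if {R : realType} (n : nat) (b : bool) (F : 'I_n -> R[i]) :
  \sum_(c < n) (if b then F c else 0) = if b then \sum_c F c else 0.
Proof. by case: b => //; rewrite big1. Qed.

Lemma hat_rowsum {R : realType} p2 (d o : nat -> R[i]) ph (r : 'I_p2) : (3 <= p2)%N ->
  \sum_c `|hatmx p2 d o ph true r c| =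
    `|d r.+1| + (if r == 0%N :> nat then `|ph * o p2| else `|o r|) +
    (if r.+1 == p2 then `|ph^*%R * (o p2)^*%R| else `|(o r.+1)^*%R|).
Proof.
move=> hp; rewrite (eq_bigr _ (fun c _ => @hat_entry R p2 d o ph r c hp)).
rewrite !big_split /= !sum_if !sum_ind.
have := ltn_ord r; move: (nat_of_ord r) => a ha.
repeat (case: eqP => ? /=); repeat (case: ltnP => ? /=); try (exfalso; lia); subst; rewrite ?normr0 ?addr0 ?add0r //.
by rewrite addrAC.
Qed.

Lemma hat_diff {R : realType} p2 (d o : nat -> R[i]) ph : (3 <= p2)%N ->
  hatmx p2 d o ph true - hatmx p2 d o 0 false =
  hatmx p2 (fun _ => 0) (fun m => if m == p2 then o p2 else 0) ph true.
Proof.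
move=> hp; apply/matrixP => r c; rewrite !mxE /= !conjcE ?eqSS.
have := ltn_ord r; have := ltn_ord c.
move: (nat_of_ord r) (nat_of_ord c) => a b hb ha.
repeat (case: eqP => ? /=); try (exfalso; lia); subst; rewrite ?subrr ?subr0 ?rmorph0 //.
Qed.

Lemma hat_adj {R : realType} p2 (d d' o : nat -> R[i]) ph : (3 <= p2)%N ->
  (forall m, d' m = (d m)^*%R) ->
  (hatmx p2 d o ph true)^t* = hatmx p2 d' o ph true.
Proof.
move=> hp hd; apply/matrixP => r c; rewrite !mxE /= !conjcE ?eqSS.
have := ltn_ord r; have := ltn_ord c.
move: (nat_of_ord r) (nat_of_ord c) => a b hb ha.
repeat (case: eqP => ? /=); try (exfalso; lia); subst; rewrite ?hd ?rmorph0 ?rmorphM /= ?conjCK //.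
Qed.

Lemma norm_expi {R : realType} (x : R) : `|expi x| = 1.
Proof.
rewrite /expi normc_def /= cos2Dsin2 sqrtr1 //.
Qed.

Lemma adjB {R : realType} n (A B : 'M[R[i]]_n) : A^t* - B^t* = (A - B)^t*.
Proof. by apply/matrixP => r c; rewrite !mxE rmorphB. Qed.

Lemma adjZ {R : realType} n (e : R[i]) (A : 'M[R[i]]_n) : (e *: A)^t* = e^*%R *: A^t*.
Proof. by apply/matrixP => r c; rewrite !mxE rmorphM. Qed.

Lemma adj0 {R : realType} n : (0 : 'M[R[i]]_n)^t* = 0.
Proof. by apply/matrixP => r c; rewrite !mxE rmorph0. Qed.

Definition Hm {R : realType} p2 (z : R[i]) (x : R) : 'M[R[i]]_p2 :=
  hatmx p2 (fun _ => 0) (fun m => if m == p2 then z else 0) (expi x) true.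

Lemma Hm_adj {R : realType} p2 (z : R[i]) x : (3 <= p2)%N -> (Hm p2 z x)^t* = Hm p2 z x.
Proof. by move=> hp; apply: hat_adj => // m; rewrite rmorph0. Qed.

Lemma Hm_row {R : realType} p2 (z : R[i]) x (r : 'I_p2) : (3 <= p2)%N ->
  \sum_c `|Hm p2 z x r c| =
   (if r == 0%N :> nat then `|z| else 0) + (if r.+1 == p2 then `|z| else 0).
Proof.
move=> hp; rewrite hat_rowsum // normr0 add0r eqxx !normrM norm_conjC norm_expi !mul1r.
have := ltn_ord r; move: (nat_of_ord r) => a ha.
by repeat (case: eqP => ? /=); try (exfalso; lia); rewrite ?rmorph0 ?normr0 ?norm_conjC ?norm_expi ?mul1r ?addr0 ?add0r.
Qed.

Definition Dm {R : realType} p1 (a0 a1 : int -> int -> R[i]) (r : nat) : R[i] :=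
  `|a1 (p1%:Z) (r.+1%:Z)| + `|a0 (p1%:Z) (r.+1%:Z)| + `|a0 (p1%:Z) ((r.+1%:Z) - 1)|.

Lemma intS1 (a : nat) : (a.+1)%:Z - 1 = a%:Z.
Proof. by rewrite -addn1 PoszD addrK. Qed.

Lemma Dm_hat {R : realType} p1 p2 (a0 a1 : int -> int -> R[i]) d x (r : 'I_p2) :
  (3 <= p2)%N -> periodic2 p1 p2 a0 -> (forall m, `|d m| = `|a1 p1%:Z m%:Z|) ->
  \sum_c `|hatmx p2 d (fun m => a0 p1%:Z m%:Z) (expi x) true r c| = Dm p1 a0 a1 r.
Proof.
move=> hp hper hd; rewrite hat_rowsum // /Dm hd !normrM ?norm_conjC norm_expi !mul1r.
have := ltn_ord r; move: (nat_of_ord r) => a ha.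
rewrite intS1.
case: eqP => [->|a0n]; case: eqP => [h|hn] //; try (exfalso; lia).
  have h0 : a0 p1%:Z (Posz 0) = a0 p1%:Z p2%:Z.
    by have := (hper p1%:Z (Posz 0)).2; rewrite add0r => ->.
  by rewrite h0 addrAC.
  by rewrite -h addrAC.
by rewrite addrAC.
Qed.


Definition Jb {R : realType} p1 p2 (a0 a1 b0 b1 : int -> int -> R[i]) (x y : R) (i j : 'I_p1) : 'M[R[i]]_p2 :=
  let n := i.+1 in let n' := j.+1 in
    if n == n' then Bhat p2 b0 b1 n x
    else if n == n'.+1 then Ahat p2 a0 a1 n' x
    else if n' == n.+1 then (Ahat p2 a0 a1 n x) ^t*
    else if (n == 1%N) && (n' == p1) then expi y *: Ahat p2 a0 a1 p1 x
    else if (n == p1) && (n' == 1%N) then (expi y)^*%R *: (Ahat p2 a0 a1 p1 x) ^t*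
    else 0.

Definition J0b {R : realType} p1 p2 (a0 a1 b0 b1 : int -> int -> R[i]) (i j : 'I_p1) : 'M[R[i]]_p2 :=
  let n := i.+1 in let n' := j.+1 in
    if n == n' then Bhat0 p2 b0 b1 n
    else if n == n'.+1 then Ahat0 p2 a0 a1 n'
    else if n' == n.+1 then (Ahat0 p2 a0 a1 n) ^t*
    else 0.

Lemma J1E {R : realType} p1 p2 (a0 a1 b0 b1 : int -> int -> R[i]) (x y : R) s t :
  J1mx p1 p2 a0 a1 b0 b1 x y s t =
  (Jb p1 p2 a0 a1 b0 b1 x y (tagnat.sig1 s) (tagnat.sig1 t)
   - J0b p1 p2 a0 a1 b0 b1 (tagnat.sig1 s) (tagnat.sig1 t)) (tagnat.sig2 s) (tagnat.sig2 t).
Proof. by rewrite /J1mx /Jmx /J0mx /mxblock !mxE. Qed.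

Definition Kc {R : realType} p1 p2 (a0 a1 b0 : int -> int -> R[i]) (x y : R) (i j : 'I_p1) : 'M[R[i]]_p2 :=
  let n := i.+1 in let n' := j.+1 in
    if n == n' then Hm p2 (b0 n%:Z p2%:Z) x
    else if n == n'.+1 then Hm p2 (a0 n'%:Z p2%:Z) x
    else if n' == n.+1 then Hm p2 (a0 n%:Z p2%:Z) x
    else if (n == 1%N) && (n' == p1) then expi y *: Ahat p2 a0 a1 p1 x
    else if (n == p1) && (n' == 1%N) then (expi y)^*%R *: (Ahat p2 a0 a1 p1 x) ^t*
    else 0.

Lemma Kb_eq {R : realType} p1 p2 (a0 a1 b0 b1 : int -> int -> R[i]) (x y : R) i j :
  (3 <= p2)%N ->
  Jb p1 p2 a0 a1 b0 b1 x y i j - J0b p1 p2 a0 a1 b0 b1 i j = Kc p1 p2 a0 a1 b0 x y i j.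
Proof.
move=> hp; rewrite /Jb /J0b /Kc /=.
case: ifP => _; first exact: hat_diff.
case: ifP => _; first exact: hat_diff.
case: ifP => _; first by rewrite adjB /Ahat /Ahat0 hat_diff // Hm_adj.
case: ifP => _; first by rewrite subr0.
case: ifP => _; first by rewrite subr0.
by rewrite subr0.
Qed.

Lemma Kc_herm {R : realType} p1 p2 (a0 a1 b0 : int -> int -> R[i]) (x y : R) i j :
  (3 <= p1)%N -> (3 <= p2)%N ->
  Kc p1 p2 a0 a1 b0 x y j i = (Kc p1 p2 a0 a1 b0 x y i j)^t*.
Proof.
move=> hp1 hp; rewrite /Kc /=.
have := ltn_ord i; have := ltn_ord j.
move: (nat_of_ord i) (nat_of_ord j) => a b hb ha.
rewrite !eqSS.
repeat (case: eqP => ? /=); try (exfalso; lia); subst;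
  rewrite ?Hm_adj ?adjZ ?adj0 ?conjCK ?trmxCK //.
Qed.

Lemma RS0 {R : realType} p2 (r : 'I_p2) : \sum_c `|(0 : 'M[R[i]]_p2) r c| = 0.
Proof. by rewrite big1 // => c _; rewrite mxE normr0. Qed.

Lemma RSc1 {R : realType} p1 p2 (a0 a1 : int -> int -> R[i]) x y (r : 'I_p2) :
  (3 <= p2)%N -> periodic2 p1 p2 a0 ->
  \sum_c `|(expi y *: Ahat p2 a0 a1 p1 x) r c| = Dm p1 a0 a1 r.
Proof.
move=> hp hper.
under eq_bigr do rewrite mxE normrM norm_expi mul1r.
by apply: Dm_hat.
Qed.

Lemma RSc2 {R : realType} p1 p2 (a0 a1 : int -> int -> R[i]) x y (r : 'I_p2) :
  (3 <= p2)%N -> periodic2 p1 p2 a0 ->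
  \sum_c `|((expi y)^*%R *: (Ahat p2 a0 a1 p1 x)^t*) r c| = Dm p1 a0 a1 r.
Proof.
move=> hp hper.
under eq_bigr do rewrite mxE normrM norm_conjC norm_expi mul1r.
rewrite /Ahat (@hat_adj R p2 _ (fun m => (a1 p1%:Z m%:Z)^*%R)) //.
by apply: Dm_hat => // m; rewrite norm_conjC.
Qed.

Definition Ef {R : realType} p2 (z : R[i]) (r : nat) : R[i] :=
  (if r == 0%N then `|z| else 0) + (if r.+1 == p2 then `|z| else 0).

Lemma rowKc {R : realType} p1 p2 (a0 a1 b0 : int -> int -> R[i]) (x y : R) (i j : 'I_p1) (r : 'I_p2) :
  (3 <= p1)%N -> (3 <= p2)%N -> periodic2 p1 p2 a0 ->
  \sum_c `|Kc p1 p2 a0 a1 b0 x y i j r c| =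
  (if j == i :> nat then Ef p2 (b0 i.+1%:Z p2%:Z) r else 0)
 + (if i != 0%N :> nat then (if j == i.-1 :> nat then Ef p2 (a0 i%:Z p2%:Z) r else 0) else 0)
 + (if i.+1 != p1 then (if j == i.+1 :> nat then Ef p2 (a0 i.+1%:Z p2%:Z) r else 0) else 0)
 + (if i == 0%N :> nat then (if j == p1.-1 :> nat then Dm p1 a0 a1 r else 0) else 0)
 + (if i.+1 == p1 then (if j == 0%N :> nat then Dm p1 a0 a1 r else 0) else 0).
Proof.
move=> hp1 hp hper; rewrite /Kc /=.
have := ltn_ord i; have := ltn_ord j.
move: (nat_of_ord i) (nat_of_ord j) => a b hb ha.
rewrite !eqSS.
repeat (case: eqP => ? /=); try (exfalso; lia); subst;
  rewrite ?Hm_row ?RSc1 ?RSc2 ?RS0 ?addr0 ?add0r //.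
Qed.

Definition Es {R : realType} p2 (z : R[i]) (r : nat) : R[i] :=
  if (r.+1 == 1%N) || (r.+1 == p2) then z else 0.

Lemma Cblock_rr {R : realType} p1 p2 (a0 a1 b0 : int -> int -> R[i]) n (r : 'I_p2) :
  Cblock p1 p2 a0 a1 b0 n r r =
  if n == 1%N then Es p2 (e1 p2 a0 b0) r + Dm p1 a0 a1 r
  else if n == p1 then Es p2 (ep1 p1 p2 a0 b0) r + Dm p1 a0 a1 r
  else Es p2 (cc p2 a0 b0 n) r.
Proof.
rewrite /Cblock; case: ifP => _; [|case: ifP => _];
by rewrite /endsmx /Dmx !mxE ?eqxx ?mulr1n.
Qed.

Lemma blockrow {R : realType} p1 p2 (a0 a1 b0 : int -> int -> R[i]) (x y : R) (i : 'I_p1) (r : 'I_p2) :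
  (3 <= p1)%N -> (3 <= p2)%N -> periodic2 p1 p2 a0 ->
  \sum_j \sum_c `|Kc p1 p2 a0 a1 b0 x y i j r c| = Cblock p1 p2 a0 a1 b0 i.+1 r r.
Proof.
move=> hp1 hp hper.
rewrite (eq_bigr _ (fun j _ => @rowKc R p1 p2 a0 a1 b0 x y i j r hp1 hp hper)).
rewrite !big_split /= !sum_if !sum_ind Cblock_rr /Ef /Es /e1 /ep1 /cc.
have := ltn_ord i; have := ltn_ord r.
move: (nat_of_ord i) (nat_of_ord r) => a b hb ha.
rewrite !eqSS.
repeat (case: eqP => ? /=); repeat (case: ltnP => ? /=); try (exfalso; lia); subst;
  rewrite ?addr0 ?add0r ?intS1 //.
all: by rewrite addrAC.
Qed.

Lemma sum_blocks {R : realType} p1 p2 (F : 'I_p1 -> 'I_p2 -> R[i]) :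
  \sum_(t < \sum_(i < p1) p2) F (@tagnat.sig1 p1 (fun _ => p2) t) (@tagnat.sig2 p1 (fun _ => p2) t)
  = \sum_j \sum_c F j c.
Proof.
rewrite (reindex (@tagnat.rank p1 (fun _ => p2))) /=; last exact: tagnat.rank_bij_on.
rewrite (@sig_big_dep _ 0 +%R _ (fun _ => 'I_p2) xpredT (fun _ _ => true) F) /=.
by apply: eq_bigr => p _; rewrite /tagnat.sig1 /tagnat.sig2 tagnat.rankK.
Qed.

Lemma am_gm {R : realType} (a b : R[i]) : 0 <= a -> 0 <= b -> a * b *+ 2 <= a ^+ 2 + b ^+ 2.
Proof.
move=> a0 b0.
have ra : a \is Num.real by apply: ger0_real.
have rb : b \is Num.real by apply: ger0_real.
rewrite -subr_ge0.
have -> : a ^+ 2 + b ^+ 2 - a * b *+ 2 = `|a - b| ^+ 2.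
  rewrite real_normK ?rpredB // sqrrB; by rewrite addrAC.
exact: exprn_ge0.
Qed.

Lemma psd_dd {R : realType} n (M D : 'M[R[i]]_n) :
  (forall i j, M j i = (M i j)^*) -> (forall i j, i != j -> D i j = 0) ->
  (forall i, \sum_j `|M i j| <= D i i) -> psdmx (D + M).
Proof.
move=> hM hD hS.
have Dge0 : forall i, 0 <= D i i.
  by move=> i; apply: le_trans (hS i); apply: sumr_ge0 => j _.
have Dreal : forall i, (D i i)^* = D i i.
  by move=> i; apply: conj_Creal; apply: ger0_real.
split.
  apply/matrixP => i j; rewrite !mxE rmorphD /= hM conjCK.
  case: (eqVneq i j) => [->|ij]; first by rewrite Dreal.
  by rewrite hD ?hD // 1?eq_sym // rmorph0.
move=> v.
pose w i := v i ord0.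
pose q := \sum_i \sum_k (w i)^* * M i k * w k.
pose P := \sum_i D i i * ((w i)^* * w i).
have -> : (v ^t* *m (D + M) *m v) ord0 ord0 = P + q.
  rewrite mxE /P /q -big_split /=.
  under eq_bigr => j _ do rewrite mxE big_distrl /=.
  rewrite exchange_big /=; apply: eq_bigr => i _.
  rewrite (bigD1 i) //= [X in _ = _ + X](bigD1 i) //= addrA; congr (_ + _).
    by rewrite !mxE mulrDr mulrDl; congr (_ + _); rewrite /w; ring.
  apply: eq_bigr => k ki; rewrite !mxE hD 1?eq_sym // add0r.
  by rewrite /w; ring.
have qreal : q \is Num.real.
  apply/CrealP; rewrite /q rmorph_sum /= exchange_big /=; apply: eq_bigr => i _.
  rewrite rmorph_sum /=; apply: eq_bigr => k _.
  rewrite !rmorphM /= conjCK (hM i k); ring.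
have Pge0 : 0 <= P.
  by apply: sumr_ge0 => i _; rewrite -normCKC mulr_ge0 // exprn_ge0.
have qle : `|q| <= P.
  have h1 : `|q| <= \sum_i \sum_k `|M i k| * (`|w i| * `|w k|).
    apply: le_trans (ler_norm_sum _ _ _) _; apply: ler_sum => i _.
    apply: le_trans (ler_norm_sum _ _ _) _; apply: ler_sum => k _.
    by rewrite !normrM norm_conjC mulrA [`|w i| * _]mulrC.
  apply: le_trans h1 _.
  rewrite -(ler_pMn2r (isT : (0 < 2)%N)).
  have h2 : (\sum_i \sum_k `|M i k| * (`|w i| * `|w k|)) *+ 2 <=
      \sum_i \sum_k `|M i k| * (`|w i| ^+ 2 + `|w k| ^+ 2).
    rewrite -sumrMnl; apply: ler_sum => i _.
    rewrite -sumrMnl; apply: ler_sum => k _.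
    by rewrite -mulrnAr ler_wpM2l // am_gm.
  apply: le_trans h2 _.
  have -> : \sum_i \sum_k `|M i k| * (`|w i| ^+ 2 + `|w k| ^+ 2) =
      (\sum_i (\sum_k `|M i k|) * `|w i| ^+ 2) *+ 2.
    rewrite mulr2n.
    under eq_bigr do (under eq_bigr do rewrite mulrDr).
    under eq_bigr do rewrite big_split /=.
    rewrite big_split /=; congr (_ + _).
      by apply: eq_bigr => i _; rewrite mulr_suml.
    rewrite exchange_big /=; apply: eq_bigr => i _.
    rewrite mulr_suml; apply: eq_bigr => k _.
    by rewrite (hM k i) norm_conjC.
  rewrite ler_pMn2r // /P; apply: ler_sum => i _.
  by rewrite -normCKC ler_wpM2r // exprn_ge0.
by have := real_lerNnormlW qreal qle; rewrite -subr_ge0 opprK addrC.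
Qed.

Lemma Cblock_off {R : realType} p1 p2 (a0 a1 b0 : int -> int -> R[i]) n (r c : 'I_p2) :
  r != c -> Cblock p1 p2 a0 a1 b0 n r c = 0.
Proof.
move=> rc; rewrite /Cblock; case: ifP => _; [|case: ifP => _];
by rewrite /endsmx /Dmx !mxE (negbTE rc) ?mulr0n ?addr0.
Qed.

Lemma sig_neq p1 p2 (s t : 'I_(\sum_(i < p1) p2)) :
  s != t -> @tagnat.sig1 p1 (fun _ => p2) s = @tagnat.sig1 p1 (fun _ => p2) t ->
  (@tagnat.sig2 p1 (fun _ => p2) s : nat) != @tagnat.sig2 p1 (fun _ => p2) t.
Proof.
move=> st h; apply: contra st => /eqP e.
rewrite -(tagnat.sig2K s) -(tagnat.sig2K t).
rewrite -val_eqE /= tagnat.eq_Rank h eqxx /=; exact/eqP.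
Qed.

Local Open Scope complex_scope.

Theorem lemma3p1 (R : realType) (p1 p2 : nat) (a0 a1 b0 b1 : int -> int -> R[i]) :
  (3 <= p1)%N -> (3 <= p2)%N ->
  periodic2 p1 p2 a0 -> periodic2 p1 p2 a1 ->
  periodic2 p1 p2 b0 -> periodic2 p1 p2 b1 ->
  (forall n m : int, b1 n m \is Num.real) ->
  forall x y : R, 0 <= x <= 2 * pi -> 0 <= y <= 2 * pi ->
    loewner_le (- Cmx p1 p2 a0 a1 b0) (J1mx p1 p2 a0 a1 b0 b1 x y) /\
    loewner_le (J1mx p1 p2 a0 a1 b0 b1 x y) (Cmx p1 p2 a0 a1 b0).
Proof.
move=> hp1 hp2 hper _ _ _ _ x y _ _.
set J := J1mx p1 p2 a0 a1 b0 b1 x y.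
set D := Cmx p1 p2 a0 a1 b0.
have JE : forall s t, J s t = Kc p1 p2 a0 a1 b0 x y (tagnat.sig1 s) (tagnat.sig1 t)
                             (tagnat.sig2 s) (tagnat.sig2 t).
  by move=> s t; rewrite /J J1E Kb_eq.
have herm : forall s t, J t s = (J s t)^*%R.
  by move=> s t; rewrite !JE Kc_herm // !mxE.
have rows : forall s, \sum_t `|J s t| = D s s.
  move=> s; under eq_bigr do rewrite JE.
  rewrite (@sum_blocks R p1 p2 (fun j c => `|Kc p1 p2 a0 a1 b0 x y (tagnat.sig1 s) j (tagnat.sig2 s) c|)).
  by rewrite blockrow // /D /Cmx /mxblock mxE eqxx.
have diag : forall s t, s != t -> D s t = 0.
  move=> s t; rewrite /D /Cmx /mxblock mxE.
  move=> st; case: ifP => [/eqP h|_]; last by rewrite mxE.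
  by apply: Cblock_off; exact: sig_neq.
split.
  rewrite /loewner_le opprK addrC; apply: psd_dd => //.
  by move=> s; rewrite rows.
rewrite /loewner_le; apply: psd_dd => //.
  by move=> s t; rewrite mxE [(- J) s t]mxE herm rmorphN.
by move=> s; rewrite -rows le_eqVlt; apply/orP; left; apply/eqP; apply: eq_bigr => t _; rewrite mxE normrN.
Qed.
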